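(* Let $s\in\{0,1\}$, $s'=1-s$, let $\mathbf{T}_s$ be any transport map from $\mathcal{P}_s$ to $\mathcal{P}_{s'}$, let $\delta\ge0$, and let $f:\mathcal{X}\times\{0,1\}\to[0,1]$ be a measurable model. If $\Delta\mathrm{MDP}(f,\mathbf{T}_s)\le\delta$, then $\Delta\mathrm{WDP}(f)\le\delta$ and $\Delta\overline{\mathrm{DP}}(f)\le\delta$.
   Context: Setting: $(\mathbf{X},Y,S)$ is a random tuple with $\mathbf{X}\in\mathcal{X}\subset\mathbb{R}^d$ and binary sensitive attribute $S\in\{0,1\}$; $\mathcal{P}_s$ is the conditional distribution of $\mathbf{X}$ given $S=s$ (assumed absolutely continuous w.r.t. Lebesgue measure), $\mathbb{E}_s$ its expectation. A transport map from $\mathcal{P}_s$ to $\mathcal{P}_{s'}$ is a map $\mathbf{T}$ with $\mathbf{T}_{\#}\mathcal{P}_s=\mathcal{P}_{s'}$. $\mathcal{P}_{f_s}$ is the distribution of $f(\mathbf{X},s)$ with $\mathbf{X}\sim\mathcal{P}_s$. Definitions: $\Delta\mathrm{MDP}(f,\mathbf{T}_s):=\mathbb{E}_s|f(\mathbf{X},s)-f(\mathbf{T}_s(\mathbf{X}),s')|$; $\Delta\mathrm{WDP}(f):=\mathcal{W}(\mathcal{P}_{f_0},\mathcal{P}_{f_1})$ where $\mathcal{W}$ is the 1-Wasserstein distance $\mathcal{W}(\mathcal{Q}_1,\mathcal{Q}_2)=\inf_{\gamma}\mathbb{E}_{(x,y)\sim\gamma}|x-y|$ over couplings $\gamma$ of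 $\mathcal{Q}_1,\mathcal{Q}_2$; $\Delta\overline{\mathrm{DP}}(f):=|\mathbb{E}(f(\mathbf{X},0)\mid S=0)-\mathbb{E}(f(\mathbf{X},1)\mid S=1)|$. *)

(* Defs.v *)
From HB Require Import structures.
From mathcomp Require Import all_boot all_order all_algebra.
From mathcomp Require Import all_classical all_reals all_analysis.
Set Implicit Arguments. Unset Strict Implicit. Unset Printing Implicit Defensive.
Import Order.TTheory GRing.Theory Num.Theory.
Local Open Scope classical_set_scope.
Local Open Scope ring_scope.
Local Open Scope ereal_scope.

Definition coupling (R : realType) (Q1 Q2 : set R -> \bar R)
  (g : probability (R * R)%type R) : Prop :=
  (forall A : set R, measurable A -> g (fst @^-1` A) = Q1 A) /\
  (forall A : set R, measurable A -> g (snd @^-1` A) = Q2 A).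

Definition W1 (R : realType) (Q1 Q2 : set R -> \bar R) : \bar R :=
  ereal_inf [set \int[g]_z (`|z.1 - z.2|%R)%:E | g in coupling Q1 Q2].

Definition law_f (d : measure_display) (T : measurableType d) (R : realType)
  (P : bool -> probability T R) (f : T -> bool -> R) (s : bool) : set R -> \bar R :=
  fun A => P s ((fun x => f x s) @^-1` A).

Definition DeltaMDP (d : measure_display) (T : measurableType d) (R : realType)
  (P : bool -> probability T R) (f : T -> bool -> R) (s : bool) (Ts : T -> T) : \bar R :=
  \int[P s]_x (`|f x s - f (Ts x) (~~ s)|%R)%:E.

Definition DeltaWDP (d : measure_display) (T : measurableType d) (R : realType)
  (P : bool -> probability T R) (f : T -> bool -> R) : \bar R :=
  W1 (law_f P f false) (law_f P f true).

Definition DeltaDPbar (d : measure_display) (T : measurableType d) (R : realType)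
  (P : bool -> probability T R) (f : T -> bool -> R) : \bar R :=
  `| \int[P false]_x (f x false)%:E - \int[P true]_x (f x true)%:E |.

Definition transport_map (d : measure_display) (T : measurableType d) (R : realType)
  (P Q : probability T R) (Ts : T -> T) : Prop :=
  measurable_fun setT Ts /\
  forall A : set T, measurable A -> P (Ts @^-1` A) = Q A.

(* Main.v *)
Require Import Defs.
From HB Require Import structures.
From mathcomp Require Import all_boot all_order all_algebra.
From mathcomp Require Import all_classical all_reals all_analysis.
From mathcomp Require Import measurable_realfun.
Import Order.TTheory GRing.Theory Num.Theory.
Local Open Scope classical_set_scope.
Local Open Scope ring_scope.

Lemma W1_le (R : realType) (d : measure_display) (T : measurableType d)
  (Q : probability T R) (a b : T -> R) (Q1 Q2 : set R -> \bar R) :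
  measurable_fun setT a -> measurable_fun setT b ->
  (forall A, measurable A -> Q (a @^-1` A) = Q1 A) ->
  (forall A, measurable A -> Q (b @^-1` A) = Q2 A) ->
  (W1 Q1 Q2 <= \int[Q]_x (`|a x - b x|)%:E)%E.
Proof.
move=> ma mb h1 h2.
have mab : measurable_fun setT (fun x => (a x, b x)) by exact: measurable_fun_pair.
pose X : {mfun T >-> (R * R)%type} :=
  HB.pack (fun x => (a x, b x)) (isMeasurableFun.Build _ _ _ _ _ mab).
apply: ereal_inf_lbound; exists (distribution Q X).
  by split => A mA; rewrite /distribution /pushforward; [apply: h1|apply: h2].
rewrite /distribution ge0_integral_pushforward //.
- apply/measurable_EFinP; apply: measurableT_comp => //.
  exact: measurable_funB.
Qed.

Theorem mainTheorem5 (R : realType) (d : measure_display) (T : measurableType d)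
  (P : bool -> probability T R) (s : bool) (Ts : T -> T) (delta : R)
  (f : T -> bool -> R) :
  transport_map (P s) (P (~~ s)) Ts ->
  (0 <= delta) ->
  (forall b, measurable_fun setT (fun x => f x b)) ->
  (forall x b, 0 <= f x b <= 1) ->
  (DeltaMDP P f s Ts <= delta%:E)%E ->
  (DeltaWDP P f <= delta%:E)%E /\ (DeltaDPbar P f <= delta%:E)%E.
Proof.
move=> [mTs hTs] d0 mf f01 hMDP.
have mg : measurable_fun setT (fun x => f (Ts x) (~~ s)).
  exact: measurableT_comp (mf _) mTs.
have lawg : forall A, measurable A ->
    P s ((fun x => f (Ts x) (~~ s)) @^-1` A) = law_f P f (~~ s) A.
  move=> A mA; rewrite /law_f -hTs //.
  by rewrite -[X in measurable X]setTI; apply: mf.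
have lawf : forall A, measurable A ->
    P s ((fun x => f x s) @^-1` A) = law_f P f s A by [].
have bnd : forall h : T -> R, measurable_fun setT h -> (forall x, 0 <= h x <= 1) ->
    (P s).-integrable setT (EFin \o h).
  move=> h mh h01; apply: measurable_bounded_integrable => //.
    by apply: (le_lt_trans (probability_le1 _ _)); rewrite ?ltry.
  exists 1; split; first by [].
  move=> M M1 x _; have /andP[h0 h1] := h01 x.
  by rewrite /= ger0_norm // (le_trans h1) // ltW.
have ig : (P s).-integrable setT (EFin \o (fun x => f (Ts x) (~~ s))).
  by apply: bnd.
have i_s : (P s).-integrable setT (EFin \o (fun x => f x s)) by apply: bnd.
have key : (\int[P (~~ s)]_x (f x (~~ s))%:E = \int[P s]_x (f (Ts x) (~~ s))%:E)%E.
  rewrite (eq_measure_integral (pushforward (P s) Ts)); last first.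
    by move=> A mA _; symmetry; exact: hTs.
  rewrite ge0_integral_pushforward //.
  - exact/measurable_EFinP.
  - by move=> y _; rewrite lee_fin; case/andP: (f01 y (~~ s)).
have diff1 : (`| \int[P s]_x (f x s)%:E - \int[P s]_x (f (Ts x) (~~ s))%:E | <=
    DeltaMDP P f s Ts)%E.
  rewrite -integralB_EFin //; apply: le_trans (le_abse_integral _ _ _) _ => //.
  by apply: emeasurable_funB; exact/measurable_EFinP.
have diff2 : (`| \int[P s]_x (f (Ts x) (~~ s))%:E - \int[P s]_x (f x s)%:E | <=
    DeltaMDP P f s Ts)%E.
  rewrite -integralB_EFin //; apply: le_trans (le_abse_integral _ _ _) _ => //.
    by apply: emeasurable_funB; exact/measurable_EFinP.
  rewrite le_eqVlt; apply/orP; left; apply/eqP; apply: eq_integral => x _.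
  by rewrite -EFinB /= distrC.
have W1s : (W1 (law_f P f s) (law_f P f (~~ s)) <= DeltaMDP P f s Ts)%E.
  exact: W1_le (mf s) mg lawf lawg.
have W1s' : (W1 (law_f P f (~~ s)) (law_f P f s) <= DeltaMDP P f s Ts)%E.
  have H := @W1_le _ _ _ _ _ _ _ _ mg (mf s) lawg lawf.
  apply: (le_trans H).
  rewrite le_eqVlt; apply/orP; left; apply/eqP; apply: eq_integral => x _.
  by rewrite distrC.
rewrite /DeltaWDP /DeltaDPbar.
destruct s; simpl in *.
- split; first exact: le_trans W1s' hMDP.
  rewrite key; exact: le_trans diff2 hMDP.
- split; first exact: le_trans W1s hMDP.
  rewrite key; exact: le_trans diff1 hMDP.
Qed.
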